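(* Let $P_k\ge 1$, $\mu>0$, $\beta>0$, $s_k>0$ and $\nu=(\nu_1,\dots,\nu_{P_k})^\top\in\mathbb{R}^{P_k}$. Consider $$\min_{x\in\mathbb{R}^{P_k},\ x\ge 0}\ \ -U_k\Big(\sum_{i=1}^{P_k}x_i\Big)+\frac{\mu}{2}\|x-\nu\|_2^2 .$$ Then this problem has a unique minimizer $x^\star$, given by $x^\star_i=\max(0,\nu_i+\zeta)$ for all $i$, where $\zeta$ is the unique positive number such that $\sum_{i}\max(0,\nu_i+\zeta)>0$ and $$\mu\zeta=U_k'\Big(\sum_{i=1}^{P_k}\max(0,\nu_i+\zeta)\Big).$$ Moreover, suppose (after relabeling) $\nu_1\ge\nu_2\ge\dots\ge\nu_{P_k}$, and use the convention $U_k'(0)=+\infty$. If there is a smallest index $i'\in\{2,\dots,P_k\}$ such that $\zeta_0:=-\nu_{i'}>0$ and $\mu\zeta_0\ge U_k'\big(\sum_{i=1}^{P_k}\max(0,\nu_i+\zeta_0)\big)$, then $\zeta$ is the largest real root of the cubic equation $$\mu\zeta\Big(\sum_{i=1}^{i'-1}(\nu_i+\zeta)\Big)^2=\beta\sum_{i=1}^{i'-1}(\nu_i+\zeta)+s_k ;$$ otherwise $\zeta$ is the largest real root of the cubic equation $$\mu\zeta\Big(\sum_{i=1}^{P_k}(\nu_i+\zeta)\Big)^2=\beta\sum_{i=1}^{P_k}(\nu_i+\zeta)+s_k .$$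
   Context: $U_k(u)=\beta\log u-\frac{s_k}{u}$ for $u>0$ (so $U_k'(u)=\frac{\beta}{u}+\frac{s_k}{u^2}$), and $-U_k(0)$ is taken to be $+\infty$, so that the objective equals $+\infty$ at $x=0$. *)

(* Defs.v *)
From HB Require Import structures.
From mathcomp Require Import all_boot all_order all_algebra.
From mathcomp Require Import all_classical all_reals all_analysis.
Set Implicit Arguments. Unset Strict Implicit. Unset Printing Implicit Defensive.
Import Order.TTheory GRing.Theory Num.Theory.
Local Open Scope ring_scope.

Section Defs.
Variable R : realType.

Definition Uk (beta s u : R) : R := beta * ln u - s / u.

Definition Uk' (beta s u : R) : R := beta / u + s / u ^+ 2.

Definition Uk'_ext (beta s u : R) : \bar R :=
  if 0 < u then (Uk' beta s u)%:E else +oo%E.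

Definition objective n (beta s mu : R) (nu x : 'I_n -> R) : \bar R :=
  let S := \sum_(i < n) x i in
  if S == 0 then +oo%E
  else (- Uk beta s S + mu / 2 * \sum_(i < n) (x i - nu i) ^+ 2)%:E.

Definition feasible n (x : 'I_n -> R) : Prop := forall i, 0 <= x i.

Definition is_minimizer n (beta s mu : R) (nu x : 'I_n -> R) : Prop :=
  feasible x /\
  forall y, feasible y -> (objective beta s mu nu x <= objective beta s mu nu y)%E.

Definition zeta_cond n (beta s mu : R) (nu : 'I_n -> R) (z : R) : Prop :=
  let S := \sum_(i < n) Num.max 0 (nu i + z) in
  0 < z /\ 0 < S /\ mu * z = Uk' beta s S.

(* index condition on j (0-based; j >= 1 corresponds to i' in {2,...,P_k}):
   zeta0 := - nu_j > 0 and mu zeta0 >= U_k'(sum_i max(0, nu_i + zeta0)) *)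
Definition index_cond n (beta s mu : R) (nu : 'I_n -> R) (j : 'I_n) : Prop :=
  let z0 := - nu j in
  (1 <= j)%N /\ 0 < z0 /\
  (Uk'_ext beta s (\sum_(i < n) Num.max 0 (nu i + z0)) <= (mu * z0)%:E)%E.

Definition smallest_index n (beta s mu : R) (nu : 'I_n -> R) (j : 'I_n) : Prop :=
  index_cond beta s mu nu j /\
  forall k : 'I_n, index_cond beta s mu nu k -> (j <= k)%N.

Definition cubic_eq n (beta s mu : R) (nu : 'I_n -> R) (m : nat) (z : R) : Prop :=
  let T := \sum_(i < n | (i < m)%N) (nu i + z) in
  mu * z * T ^+ 2 = beta * T + s.

Definition is_largest_root (E : R -> Prop) (z : R) : Prop :=
  E z /\ forall w, E w -> w <= z.

End Defs.

(* Main.v *)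
Require Import Defs.
From mathcomp Require Import all_boot all_order all_algebra all_classical all_reals all_analysis.
Import Order.TTheory GRing.Theory Num.Theory.
Import numFieldNormedType.Exports.
Set Implicit Arguments. Unset Strict Implicit.
From mathcomp Require Import ring lra.
Local Open Scope ring_scope.
Lemma cont_sum (R : realType) (I : Type) (r : seq I) (F : I -> R -> R) :
  (forall i, continuous (F i)) -> continuous (fun z => \sum_(i <- r) F i z).
Proof.
move=> hF; elim: r => [|a r IH].
  by under eq_fun do rewrite big_nil; apply: cst_continuous.
under eq_fun do rewrite big_cons.
by move=> x; apply: continuousD; [apply: hF|apply: IH].
Qed.
Lemma cont_max (R : realType) (c : R) : continuous (fun z : R => Num.max 0 (c + z)).
Proof.
move=> x.
apply: (@continuous_max R R (fun=> 0) (fun z => c + z)).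
  exact: cst_continuous.
by apply: continuousD; [apply: cst_continuous|done].
Qed.
Definition Sf (R : realType) n (nu : 'I_n -> R) (z : R) : R :=
  \sum_(i < n) Num.max 0 (nu i + z).
Lemma Sf_ge0 (R : realType) n (nu : 'I_n -> R) z : 0 <= Sf nu z.
Proof. by apply: sumr_ge0 => i _; rewrite le_max lexx. Qed.

Lemma Sf_mono (R : realType) n (nu : 'I_n -> R) z w : z <= w -> Sf nu z <= Sf nu w.
Proof. by move=> zw; apply: ler_sum => i _; rewrite le_max2 // lerD2l. Qed.

Lemma Uk'_anti (R : realType) (beta s a b : R) : 0 <= beta -> 0 <= s -> 0 < a -> a <= b ->
  Uk' beta s b <= Uk' beta s a.
Proof.
move=> hb hs ha ab; have hb0 : 0 < b by apply: lt_le_trans ab.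
rewrite /Uk'; apply: lerD.
  apply: ler_wpM2l => //.
  by rewrite lef_pV2 ?posrE.
apply: ler_wpM2l => //.
by rewrite lef_pV2 ?posrE ?exprn_gt0 // !expr2 ler_pM // ltW.
Qed.

Lemma zeta_le (R : realType) n (beta s mu : R) (nu : 'I_n -> R) z w :
  0 < beta -> 0 < s -> 0 < mu ->
  zeta_cond beta s mu nu z -> z <= w ->
  (Uk'_ext beta s (\sum_(i < n) Num.max 0 (nu i + w)) <= (mu * w)%:E)%E.
Proof.
move=> hb hs hm [z0 [S0 E]] zw.
have Sw : 0 < Sf nu w by apply: lt_le_trans (Sf_mono nu zw).
rewrite /Uk'_ext -/(Sf nu w) Sw lee_fin.
apply: le_trans (Uk'_anti (ltW hb) (ltW hs) S0 (Sf_mono nu zw)) _.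
by rewrite -/(Sf nu z) -E ler_wpM2l // ltW.
Qed.

Lemma zeta_gt (R : realType) n (beta s mu : R) (nu : 'I_n -> R) z w :
  0 < beta -> 0 < s -> 0 < mu ->
  zeta_cond beta s mu nu z -> w < z ->
  ~ (Uk'_ext beta s (\sum_(i < n) Num.max 0 (nu i + w)) <= (mu * w)%:E)%E.
Proof.
move=> hb hs hm [z0 [S0 E]] wz.
rewrite /Uk'_ext -/(Sf nu w); case: ifP => Sw; last by [].
rewrite lee_fin => H.
have := Uk'_anti (ltW hb) (ltW hs) Sw (Sf_mono nu (ltW wz)).
rewrite -/(Sf nu z) -E => H2.
have : mu * z <= mu * w by apply: le_trans H.
by rewrite ler_pM2l // leNgt wz.
Qed.

Lemma zeta_uniq (R : realType) n (beta s mu : R) (nu : 'I_n -> R) z1 z2 :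
  0 < beta -> 0 < s -> 0 < mu ->
  zeta_cond beta s mu nu z1 -> zeta_cond beta s mu nu z2 -> z1 = z2.
Proof.
move=> hb hs hm Z1 Z2.
have self : forall z, zeta_cond beta s mu nu z ->
   (Uk'_ext beta s (\sum_(i < n) Num.max 0 (nu i + z)) <= (mu * z)%:E)%E.
  by move=> z Z; apply: zeta_le Z _.
case: (ltgtP z1 z2) => // h.
  by case: (zeta_gt hb hs hm Z2 h); apply: self.
by case: (zeta_gt hb hs hm Z1 h); apply: self.
Qed.

Lemma zeta_ex (R : realType) n (beta s mu : R) (nu : 'I_n -> R) :
  (0 < n)%N -> 0 < beta -> 0 < s -> 0 < mu -> exists z, zeta_cond beta s mu nu z.
Proof.
move=> hn hb hs hm.
pose A := \sum_(i < n) `|nu i|.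
have A0 : 0 <= A by apply: sumr_ge0.
have Ai : forall i, `|nu i| <= A.
  move=> i; rewrite /A (bigD1 i) //= lerDl; apply: sumr_ge0 => *; done.
pose c := 1 + (beta + 1) / mu + s.
have c1 : 1 <= c by rewrite /c -addrA; rewrite lerDl addr_ge0 // ?divr_ge0 ?addr_ge0 // ltW.
have cm : beta + 1 <= mu * c.
  rewrite /c mulrDr mulrDr mulr1 mulrCA divff ?gt_eqF // mulr1.
  have := mulr_ge0 (ltW hm) (ltW hs); lra.
pose phi z := mu * z * (Sf nu z * Sf nu z) - beta * Sf nu z - s.
have cphi : continuous phi.
  have cS : continuous (Sf nu).
    move=> y; rewrite /Sf; apply: cont_sum => i; exact: cont_max.
  move=> x.
  have h1 : {for x, continuous (fun z : R => mu * z * (Sf nu z * Sf nu z))}.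
    apply: continuousM; first by apply: continuousM; [exact: cst_continuous|done].
    by apply: continuousM; apply: cS.
  have h2 : {for x, continuous (fun z : R => beta * Sf nu z)}.
    by apply: continuousM; [exact: cst_continuous|apply: cS].
  have := continuousB (continuousB h1 h2) (@cst_continuous R R s x).
  done.
have Slo : Sf nu (- A) = 0.
  apply: big1 => i _; apply/max_l.
  by rewrite subr_le0; apply: le_trans (Ai i); apply: ler_norm.
have Shi : c <= Sf nu (A + c).
  pose i0 : 'I_n := Ordinal hn.
  rewrite /Sf (bigD1 i0) //=.
  have M : c <= Num.max 0 (nu i0 + (A + c)).
    rewrite le_max; apply/orP; right; rewrite addrA lerDr.
    by rewrite -lerBlDl sub0r; apply: le_trans (Ai i0); rewrite -normrN ler_norm.
  apply: le_trans M _; rewrite lerDl; apply: sumr_ge0 => i _; by rewrite le_max lexx.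
have phlo : phi (- A) = - s by rewrite /phi Slo !mulr0 !subr0 sub0r.
have phhi : 0 <= phi (A + c).
  rewrite /phi; set S := Sf nu (A + c).
  have S0 : 0 <= S by apply: le_trans Shi; apply: le_trans c1.
  have hAc : c <= A + c by rewrite lerDr.
  have : (beta + 1) * S <= mu * (A + c) * S.
    apply: ler_wpM2r => //; apply: (le_trans cm); apply: ler_wpM2l => //; exact: ltW.
  move=> h1.
  have h2 : mu * (A + c) * (S * S) - beta * S = (mu * (A + c) * S - beta) * S by ring.
  rewrite h2 subr_ge0.
  have hd : 0 <= (beta+1)/mu by rewrite divr_ge0 // ?addr_ge0 // ltW.
  have h4 : s <= S by apply: le_trans Shi; rewrite /c; lra.
  have S1 : 1 <= S by apply: le_trans c1 Shi.
  set P := mu * (A + c) * S in h1 *.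
  have h3 : S <= P - beta by nra.
  nra.
have lohi : - A <= A + c by have := le_trans ler01 c1; lra.
have hv : Num.min (phi (- A)) (phi (A + c)) <= 0 <= Num.max (phi (- A)) (phi (A + c)).
  rewrite phlo; apply/andP; split.
    by rewrite ge_min oppr_le0 ltW.
  by rewrite le_max phhi orbT.
have [z _ pz] := IVT lohi (continuous_subspaceT cphi) hv.
have Sz : 0 < Sf nu z.
  rewrite lt_neqAle Sf_ge0 andbT; apply/negP => /eqP Sz0.
  by move: pz; rewrite /phi -Sz0 !mulr0 !subr0 sub0r => /eqP; rewrite oppr_eq0 gt_eqF.
have Ez : mu * z = Uk' beta s (Sf nu z).
  have SS : Sf nu z != 0 by rewrite gt_eqF.
  have e : beta * Sf nu z + s = mu * z * (Sf nu z * Sf nu z) by move: pz; rewrite /phi; lra.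
  rewrite /Uk' (_ : beta / Sf nu z + s / Sf nu z ^+ 2 = (beta * Sf nu z + s) / (Sf nu z * Sf nu z)); last by field.
  by rewrite e mulfK // mulf_neq0.
exists z; split; last by split.
have : 0 < Uk' beta s (Sf nu z) by rewrite /Uk' addr_gt0 // divr_gt0 // exprn_gt0.
by rewrite -Ez pmulr_rgt0.
Qed.

Lemma ln_le_sub1 (R : realType) (t : R) : 0 < t -> ln t <= t - 1.
Proof. by move=> t0; have := expR_ge1Dx (ln t); rewrite lnK ?posrE //; lra. Qed.

Lemma key (R : realType) n (beta s mu : R) (nu : 'I_n -> R) z (y : 'I_n -> R) :
  0 < beta -> 0 < s -> 0 < mu -> zeta_cond beta s mu nu z -> feasible y ->
  \sum_(i < n) y i != 0 ->
  - Uk beta s (\sum_(i < n) Num.max 0 (nu i + z))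
   + mu / 2 * \sum_(i < n) (Num.max 0 (nu i + z) - nu i) ^+ 2
   + mu / 2 * \sum_(i < n) (y i - Num.max 0 (nu i + z)) ^+ 2
  <= - Uk beta s (\sum_(i < n) y i) + mu / 2 * \sum_(i < n) (y i - nu i) ^+ 2.
Proof.
move=> hb hs hm [z0 [S0 E]] fy Sy0.
set x := fun i => Num.max 0 (nu i + z).
rewrite -/(Sf nu z) in S0 E *.
set Sx := Sf nu z in S0 E *.
set Sy := \sum_(i < n) y i in Sy0 *.
have Syp : 0 < Sy by rewrite lt_neqAle eq_sym Sy0 sumr_ge0.
have SxN : Sx != 0 by rewrite gt_eqF.
have SyN : Sy != 0 by [].
set A := \sum_(i < n) (y i - x i).
have eA : Sy - Sx = A by rewrite /A sumrB.
have hU : 0 <= - Uk beta s Sy + Uk beta s Sx + mu * z * A.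
  rewrite -eA E /Uk'/Uk.
  have a0 : ln Sy - ln Sx <= Sy / Sx - 1.
    by rewrite -ln_div ?posrE //; apply: ln_le_sub1; rewrite divr_gt0.
  have a1 : beta * (ln Sy - ln Sx) <= beta * (Sy / Sx - 1) by rewrite ler_wpM2l // ltW.
  have a2 : beta * (Sy / Sx - 1) = beta / Sx * (Sy - Sx) by field.
  have a3 : s / Sy - s / Sx + s / Sx ^+ 2 * (Sy - Sx) = s * (Sy - Sx) ^+ 2 / (Sy * Sx ^+ 2).
  by field; rewrite SxN SyN.
  have a4 : 0 <= s * (Sy - Sx) ^+ 2 / (Sy * Sx ^+ 2).
    apply: divr_ge0; [apply: mulr_ge0; [exact: ltW | exact: sqr_ge0] | apply: mulr_ge0; [exact: ltW | apply: exprn_ge0; exact: ltW]].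
  rewrite a2 in a1.
  have : 0 <= beta / Sx * (Sy - Sx) - beta * (ln Sy - ln Sx) + (s / Sy - s / Sx + s / Sx ^+ 2 * (Sy - Sx)) by rewrite a3; lra.
  move=> h; apply: le_trans h _; rewrite le_eqVlt; apply/orP; left; apply/eqP; ring.
set B := \sum_(i < n) (x i - nu i) * (y i - x i).
set C := \sum_(i < n) (y i - x i) ^+ 2.
have eQ : \sum_(i < n) (y i - nu i) ^+ 2 = \sum_(i < n) (x i - nu i) ^+ 2 + 2 * B + C.
  rewrite /B /C mulr_sumr -!big_split /=; apply: eq_bigr => i _; ring.
set D := \sum_(i < n) (x i - nu i - z) * (y i - x i).
have eD : D = B - z * A by rewrite /D /B /A mulr_sumr -sumrB; apply: eq_bigr => i _; ring.
have D0 : 0 <= D.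
  apply: sumr_ge0 => i _; rewrite /x /=.
  case: (leP 0 (nu i + z)) => h.
    by rewrite (_ : nu i + z - nu i - z = 0) ?mul0r //; ring.
  apply: mulr_ge0; first lra.
  rewrite subr0; exact: fy.
have mD : 0 <= mu * D by rewrite mulr_ge0 // ltW.
rewrite eD in mD; rewrite eQ.
set Qx := \sum_(i < n) (x i - nu i) ^+ 2.
have : 0 <= (- Uk beta s Sy + Uk beta s Sx + mu * z * A) + mu * (B - z * A) by apply: addr_ge0.
move=> h; rewrite -subr_ge0; apply: le_trans h _; rewrite le_eqVlt; apply/orP; left; apply/eqP; field.
by []. Qed.

Lemma cubic_root (R : realType) n (beta s mu : R) (nu : 'I_n -> R) z (m : nat) :
  0 < beta -> 0 < s -> 0 < mu -> zeta_cond beta s mu nu z ->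
  (forall i : 'I_n, (i < m)%N -> 0 <= nu i + z) ->
  (forall i : 'I_n, ~~ (i < m)%N -> nu i + z <= 0) ->
  is_largest_root (cubic_eq beta s mu nu m) z.
Proof.
move=> hb hs hm [z0 [S0 E]] Hin Hout.
rewrite -/(Sf nu z) in S0 E.
have eT : Sf nu z = \sum_(i < n | (i < m)%N) (nu i + z).
  rewrite /Sf (bigID (fun i : 'I_n => (i < m)%N)) /=.
  rewrite [X in _ + X]big1 ?addr0; last by move=> i hi; apply: max_l; apply: Hout.
  by apply: eq_bigr => i hi; apply: max_r; apply: Hin.
set Tz := \sum_(i < n | (i < m)%N) (nu i + z) in eT.
rewrite eT in S0 E.
have e0 : mu * z * Tz ^+ 2 = beta * Tz + s.
  by rewrite E /Uk'; field; rewrite gt_eqF.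
split; first exact: e0.
move=> w; rewrite /cubic_eq /=; set Tw := \sum_(i < n | (i < m)%N) (nu i + w) => ew.
rewrite leNgt; apply/negP => zw.
have TT : Tz <= Tw by apply: ler_sum => i _; rewrite lerD2l ltW.
have Tw0 : 0 < Tw by apply: lt_le_trans TT.
have h1 : beta < mu * z * Tz.
  have : 0 < (mu * z * Tz - beta) * Tz.
    by rewrite (_ : (mu * z * Tz - beta) * Tz = s) //; rewrite -[s](addKr (beta * Tz)) -e0; ring.
  by rewrite pmulr_lgt0 // subr_gt0.
have p1 : 0 < (w - z) * (mu * Tw ^+ 2).
  apply: mulr_gt0; first by rewrite subr_gt0.
  by apply: mulr_gt0 => //; apply: exprn_gt0.
have p3 : 0 <= (mu * z * Tz - beta) * (Tw - Tz).
  by apply: mulr_ge0; rewrite subr_ge0 // ltW.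
have p4 : 0 <= mu * z * (Tw - Tz) * Tw.
  apply: mulr_ge0; last exact: ltW.
  apply: mulr_ge0; last by rewrite subr_ge0.
  by apply: mulr_ge0; apply: ltW.
nra.
Qed.

Theorem lemma1 (R : realType) (n : nat) (mu beta s : R) (nu : 'I_n -> R) :
  (0 < n)%N -> 0 < mu -> 0 < beta -> 0 < s ->
  (exists! x : 'I_n -> R, is_minimizer beta s mu nu x) /\
  (exists! z : R, zeta_cond beta s mu nu z) /\
  (forall (x : 'I_n -> R) (z : R), is_minimizer beta s mu nu x ->
     zeta_cond beta s mu nu z -> forall i, x i = Num.max 0 (nu i + z)) /\
  ((forall i j : 'I_n, (i <= j)%N -> nu j <= nu i) ->
   forall z : R, zeta_cond beta s mu nu z ->
     (forall j : 'I_n, smallest_index beta s mu nu j ->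
        is_largest_root (cubic_eq beta s mu nu j) z) /\
     ((~ exists j : 'I_n, index_cond beta s mu nu j) ->
        is_largest_root (cubic_eq beta s mu nu n) z)).
Proof.
move=> hn hm hb hs.
have [z0 Z0] := zeta_ex nu hn hb hs hm.
pose xs := fun i => Num.max 0 (nu i + z0).
have fxs : feasible xs by move=> i; rewrite /xs le_max lexx.
have Sxs : \sum_(i < n) xs i != 0 by case: Z0 => _ [S0 _]; rewrite gt_eqF.
have objxs : objective beta s mu nu xs =
   (- Uk beta s (\sum_(i < n) xs i) + mu / 2 * \sum_(i < n) (xs i - nu i) ^+ 2)%:E.
  by rewrite /objective (negbTE Sxs).
have minx : is_minimizer beta s mu nu xs.
  split => // y fy; rewrite objxs /objective.
  case: ifP => [_|/negbT Sy]; first exact: leey.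
  rewrite lee_fin; apply: le_trans (key hb hs hm Z0 fy Sy).
  rewrite lerDl mulr_ge0 //; first by rewrite divr_ge0 // ltW.
  by apply: sumr_ge0 => i _; apply: sqr_ge0.
have uniqx : forall y, is_minimizer beta s mu nu y -> y = xs.
  move=> y [fy hy]; have := hy xs fxs; rewrite objxs /objective.
  case: ifP => [_|/negbT Sy]; first by [].
  rewrite lee_fin => h.
  have := le_trans (key hb hs hm Z0 fy Sy) h.
  rewrite -/xs gerDl => hC.
  have C0 : \sum_(i < n) (y i - xs i) ^+ 2 = 0.
    apply/eqP; rewrite eq_le sumr_ge0 ?andbT => [|i _]; last exact: sqr_ge0.
    by rewrite -(pmulr_rle0 _ (divr_gt0 hm (ltr0Sn _ 1))).
  apply/funext => i; apply/eqP; rewrite -subr_eq0 -sqrf_eq0.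
  have /psumr_eq0P := C0; move=> /(_ (fun j _ => sqr_ge0 _) i isT) ->; done.
have zu : forall z, zeta_cond beta s mu nu z -> z = z0.
  by move=> z Z; apply: zeta_uniq hb hs hm Z Z0.
split; first by exists xs; split => // y /uniqx.
split; first by exists z0; split => // z /zu ->.
split.
  by move=> x z /uniqx -> /zu ->.
move=> sorted z Z.
have [zpos [Spos Ez]] := Z.
have [i1 hi1] : exists i1 : 'I_n, 0 < nu i1 + z.
  apply/not_existsP => H; move: Spos; rewrite big1 ?ltxx // => i _.
  by apply: max_l; rewrite leNgt; apply/negP => /(H i).
have first0 : forall i : 'I_n, nat_of_ord i = 0%N -> 0 <= nu i + z.
  move=> i i0; apply: le_trans (ltW hi1) _; rewrite lerD2r; apply: sorted; by rewrite i0.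
have ic1 : forall k, index_cond beta s mu nu k -> z <= - nu k.
  move=> k [_ [_ hk]]; rewrite leNgt; apply/negP => lt.
  exact: (zeta_gt hb hs hm Z lt hk).
have ic2 : forall k : 'I_n, (1 <= k)%N -> z <= - nu k -> index_cond beta s mu nu k.
  move=> k k1 hk; split => //; split; first exact: lt_le_trans hk.
  exact: (zeta_le hb hs hm Z hk).
split.
  move=> j [Hj Hmin]; apply: (cubic_root hb hs hm Z).
    move=> i ij; case: (posnP i) => [i0|ipos]; first exact: first0.
    rewrite leNgt; apply/negP => neg.
    have hz : z <= - nu i by lra.
    by have := Hmin i (ic2 i ipos hz); rewrite leqNgt ij.
  move=> i; rewrite -leqNgt => ji.
  have := ic1 j Hj; have := sorted _ _ ji; lra.
move=> Hno; apply: (cubic_root hb hs hm Z).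
  move=> i _; case: (posnP i) => [i0|ipos]; first exact: first0.
  rewrite leNgt; apply/negP => neg; apply: Hno; exists i; apply: ic2 => //; lra.
by move=> i; rewrite ltn_ord.
Qed.
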